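(* Let $\mathfrak g$ be a finite-dimensional Lie algebra and equip $S(\mathfrak g)=\mathbb{C}[\mathfrak g^*]$ with the Kirillov–Kostant Poisson bracket. Then there is a Poisson-compatible preconnection $\hat\nabla$ on $\mathfrak g^*$ with $$\hat\nabla_v\,{\rm d}w=\tfrac12\,{\rm d}[v,w]\qquad (v,w\in\mathfrak g),$$ whose curvature and torsion are given, for $v,w,z\in\mathfrak g$, by $$R(v,w)\,{\rm d}z=-\tfrac14\,{\rm d}[[v,w],z],\qquad \langle T(v,w),{\rm d}z\rangle=\tfrac12\,[[v,w],z].$$
   Context: The Kirillov–Kostant bracket on $S(\mathfrak g)$ is the Poisson bracket with $\{v,w\}=[v,w]$ for $v,w\in\mathfrak g$ (viewed as linear functions on $\mathfrak g^*$), extended as a biderivation. For a function $a$, $\hat a=\{a,\cdot\}$ is its Hamiltonian vector field; for $v\in\mathfrak g$, $\hat v={\rm ad}_v$. A preconnection assigns to each function $a$ a linear map $\hat\nabla_a$ on $1$-forms with $\hat\nabla_a(b\,\xi)=\{a,b\}\xi+b\,\hat\nabla_a\xi$ and $\hat\nabla_{ab}\xi=a\,\hat\nabla_b\xi+b\,\hat\nabla_a\xi$. It is Poisson-compatible if $\hat\nabla_a{\rm d}b-\hat\nabla_b{\rm d}a={\rm d}\{a,b\}$ for all $a,b$. Its curvature is $R(a,b)=[\hat\nabla_a,\hat\nabla_b]-\hat\nabla_{\{a,b\}}$ and torsion $T(a,b)=\hat\nabla_a\hat b-\hat\nabla_b\hat a-[\hat a,\hat b]$, where for a vector field the action is defined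 by $\langle\hat\nabla_a\hat b,\xi\rangle=\hat a(\langle\hat b,\xi\rangle)-\langle\hat b,\hat\nabla_a\xi\rangle$. *)

(* Defs.v *)
From mathcomp Require Import all_boot all_order all_algebra.
From mathcomp Require Import mpoly.
Set Implicit Arguments. Unset Strict Implicit. Unset Printing Implicit Defensive.
Import GRing.Theory.
Local Open Scope ring_scope.

(* A Lie algebra g of dimension n over C is given by its structure constants
   in a basis e_0..e_{n-1}:  [e_i, e_j] = \sum_k c i j k e_k.
   S(g) = C[g^*] = {mpoly C[n]}, with e_i identified with the variable 'X_i. *)
Section KK.
Variables (C : numClosedFieldType) (n : nat) (c : 'I_n -> 'I_n -> 'I_n -> C).

Definition is_lie_sc : Prop :=
  [/\ forall i k, c i i k = 0,
      forall i j k, c i j k = - c j i k &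
      forall i j k l, \sum_(m < n) (c i j m * c m k l + c j k m * c m i l
                                    + c k i m * c m j l) = 0].

Definition SPoly := {mpoly C[n]}.

Definition lin (v : 'I_n -> C) : SPoly := \sum_(i < n) v i *: 'X_i.

Definition lie (v w : 'I_n -> C) : 'I_n -> C :=
  fun k => \sum_(i < n) \sum_(j < n) v i * w j * c i j k.

(* Kirillov-Kostant bracket: the biderivation with {X_i, X_j} = [e_i, e_j] *)
Definition pbr (a b : SPoly) : SPoly :=
  \sum_(i < n) \sum_(j < n) mderiv i a * mderiv j b * lin (c i j).

(* 1-forms (Kahler differentials of C[g^*], free on dX_i) and vector fields
   (derivations, free on d/dX_i), both as coefficient families. *)
Definition oneform := {ffun 'I_n -> SPoly}.
Definition vfield := {ffun 'I_n -> SPoly}.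

Definition dd (f : SPoly) : oneform := [ffun i => mderiv i f].
Definition fscale (b : SPoly) (xi : oneform) : oneform := [ffun i => b * xi i].
Definition fscaleC (k : C) (xi : oneform) : oneform := [ffun i => k *: xi i].

Definition vapp (X : vfield) (f : SPoly) : SPoly := \sum_(i < n) X i * mderiv i f.
Definition pair (X : vfield) (xi : oneform) : SPoly := \sum_(i < n) X i * xi i.
Definition ham (a : SPoly) : vfield := [ffun i => pbr a 'X_i].
Definition vbr (X Y : vfield) : vfield := [ffun i => vapp X (Y i) - vapp Y (X i)].

Definition preconnection (nabla : SPoly -> oneform -> oneform) : Prop :=
  [/\ forall a xi eta, nabla a (xi + eta) = nabla a xi + nabla a eta,
      forall a (k : C) xi, nabla a (fscaleC k xi) = fscaleC k (nabla a xi),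
      forall a b xi, nabla a (fscale b xi) = fscale (pbr a b) xi + fscale b (nabla a xi) &
      forall a b xi, nabla (a * b) xi = fscale a (nabla b xi) + fscale b (nabla a xi)].

Definition poisson_compatible (nabla : SPoly -> oneform -> oneform) : Prop :=
  forall a b, nabla a (dd b) - nabla b (dd a) = dd (pbr a b).

Definition curvature (nabla : SPoly -> oneform -> oneform) (a b : SPoly) (xi : oneform) : oneform :=
  nabla a (nabla b xi) - nabla b (nabla a xi) - nabla (pbr a b) xi.

(* <nabla_a X, xi> := \hat a(<X, xi>) - <X, nabla_a xi> *)
Definition cov_pair (nabla : SPoly -> oneform -> oneform) (a : SPoly) (X : vfield) (xi : oneform) : SPoly :=
  vapp (ham a) (pair X xi) - pair X (nabla a xi).

(* <T(a,b), xi> with T(a,b) = nabla_a \hat b - nabla_b \hat a - [\hat a, \hat b] *)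
Definition torsion_pair (nabla : SPoly -> oneform -> oneform) (a b : SPoly) (xi : oneform) : SPoly :=
  cov_pair nabla a (ham b) xi - cov_pair nabla b (ham a) xi - pair (vbr (ham a) (ham b)) xi.

End KK.

(* Main.v *)
Require Import Defs.
From mathcomp Require Import all_boot all_order all_algebra.
From mathcomp Require Import mpoly.
From mathcomp Require Import ring.
Set Implicit Arguments. Unset Strict Implicit. Unset Printing Implicit Defensive.
Import GRing.Theory.
Local Open Scope ring_scope.

Section Aux.
Variables (C : numClosedFieldType) (n : nat) (c : 'I_n -> 'I_n -> 'I_n -> C).
Implicit Types (u v w z : 'I_n -> C).

Lemma mderivX1 (i j : 'I_n) : mderiv i ('X_j : {mpoly C[n]}) = ((j == i)%:R)%:MP.
Proof.
rewrite mderivX mnm1E; case: eqP => [->|_].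
  have -> : (U_(i) - U_(i) = 0)%MM by apply/mnmP => k; rewrite mnmBE subnn mnm0E.
  by rewrite mpolyX0 scale1r.
by rewrite scale0r.
Qed.

Lemma mderiv_lin i u : mderiv i (lin u) = (u i)%:MP.
Proof.
rewrite /lin raddf_sum /= (bigD1 i) //= big1 ?addr0.
  by rewrite mderivZ mderivX1 eqxx -mul_mpolyC -mpolyCM mulr1.
by move=> k /negbTE nk; rewrite mderivZ mderivX1 nk scaler0.
Qed.


Lemma mulr_suml2 (F : 'I_n -> 'I_n -> {mpoly C[n]}) x :
  (\sum_i \sum_j F i j) * x = \sum_i \sum_j F i j * x.
Proof. rewrite mulr_suml; apply: eq_bigr => i _; by rewrite mulr_suml. Qed.
Lemma mulr_sumr2 (F : 'I_n -> 'I_n -> {mpoly C[n]}) x :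
  x * (\sum_i \sum_j F i j) = \sum_i \sum_j x * F i j.
Proof. rewrite mulr_sumr; apply: eq_bigr => i _; by rewrite mulr_sumr. Qed.
Lemma big_split2 (F G : 'I_n -> 'I_n -> {mpoly C[n]}) :
  \sum_i \sum_j F i j + \sum_i \sum_j G i j = \sum_i \sum_j (F i j + G i j).
Proof. rewrite -big_split; apply: eq_bigr => i _; by rewrite -big_split. Qed.
Lemma big_splitB2 (F G : 'I_n -> 'I_n -> {mpoly C[n]}) :
  \sum_i \sum_j F i j - \sum_i \sum_j G i j = \sum_i \sum_j (F i j - G i j).
Proof.
rewrite -sumrB; apply: eq_bigr => i _; by rewrite -sumrB.
Qed.
Lemma eq_big2 (F G : 'I_n -> 'I_n -> {mpoly C[n]}) :
  (forall i j, F i j = G i j) -> \sum_i \sum_j F i j = \sum_i \sum_j G i j.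
Proof. by move=> h; apply: eq_bigr => i _; apply: eq_bigr => j _. Qed.

Lemma lin_ext u u' : u =1 u' -> lin u = lin u'.
Proof. by move=> h; apply: eq_bigr => i _; rewrite h. Qed.
Lemma linD u u' : lin u + lin u' = lin (fun k => u k + u' k).
Proof. by rewrite /lin -big_split; apply: eq_bigr => i _; rewrite scalerDl. Qed.
Lemma linB u u' : lin u - lin u' = lin (fun k => u k - u' k).
Proof. by rewrite /lin -sumrB; apply: eq_bigr => i _; rewrite scalerBl. Qed.
Lemma linZ a u : a *: lin u = lin (fun k => a * u k).
Proof. by rewrite /lin scaler_sumr; apply: eq_bigr => i _; rewrite scalerA. Qed.
Lemma lin_comb (U : 'I_n -> 'I_n -> C) z :
  \sum_i lin (U i) * (z i)%:MP = lin (fun k => \sum_i U i k * z i).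
Proof.
rewrite /lin.
under eq_bigr => i _ do rewrite mulr_suml.
rewrite exchange_big /=; apply: eq_bigr => k _.
rewrite scaler_suml; apply: eq_bigr => i _.
by rewrite mulrC mul_mpolyC scalerA mulrC.
Qed.

Lemma dd_lin u : dd (lin u) = [ffun k => (u k)%:MP].
Proof. by apply/ffunP => k; rewrite !ffunE mderiv_lin. Qed.

Lemma pbr_lin_lin v w : pbr c (lin v) (lin w) = lin (lie c v w).
Proof.
rewrite /pbr /lie.
transitivity (\sum_i \sum_j lin (fun k => v i * w j * c i j k)).
  apply: eq_big2 => i j; rewrite !mderiv_lin -mpolyCM mul_mpolyC linZ.
  by [].
rewrite /lin.
under eq_bigr => i _ do rewrite exchange_big /=.
rewrite exchange_big /=; apply: eq_bigr => k _.
rewrite scaler_suml; apply: eq_bigr => i _.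
by rewrite scaler_suml.
Qed.

Lemma mderiv_sum2 k (F : 'I_n -> 'I_n -> {mpoly C[n]}) :
  mderiv k (\sum_i \sum_j F i j) = \sum_i \sum_j mderiv k (F i j).
Proof. rewrite raddf_sum; apply: eq_bigr => i _; by rewrite raddf_sum. Qed.

Lemma half (x : C) : x = 2^-1 * x + 2^-1 * x.
Proof. by field. Qed.

Definition nab (a : {mpoly C[n]}) (xi : oneform C n) : oneform C n :=
  [ffun k => \sum_i \sum_j (mderiv i a * mderiv j (xi k) * lin (c i j)
                            + (2^-1 * c i j k)%:MP * (mderiv i a * xi j))].

Lemma nab_pre : preconnection c nab.
Proof.
split.
- move=> a xi eta; apply/ffunP => k; rewrite !ffunE big_split2.
  apply: eq_big2 => i j; rewrite !ffunE mderivD; ring.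
- move=> a s xi; apply/ffunP => k; rewrite !ffunE -!mul_mpolyC mulr_sumr2.
  apply: eq_big2 => i j; rewrite !ffunE -mul_mpolyC mderiv_mulC; ring.
- move=> a b xi; apply/ffunP => k; rewrite !ffunE /pbr mulr_suml2 mulr_sumr2 big_split2.
  apply: eq_big2 => i j; rewrite !ffunE mderivM; ring.
- move=> a b xi; apply/ffunP => k; rewrite !ffunE !mulr_sumr2 big_split2.
  apply: eq_big2 => i j; rewrite mderivM; ring.
Qed.

Lemma nab_pc (Hanti : forall i j k, c i j k = - c j i k) : poisson_compatible c nab.
Proof.
have linA : forall i j, lin (c j i) = - lin (c i j).
  by move=> i j; rewrite /lin -sumrN; apply: eq_bigr => k _; rewrite Hanti scaleNr.
move=> a b; apply/ffunP => k; rewrite !ffunE.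
rewrite [X in _ - X = _]exchange_big /= big_splitB2 /pbr mderiv_sum2.
apply: eq_big2 => i j; rewrite !ffunE.
rewrite !mderivM mderiv_lin.
have -> : (c i j k)%:MP = ((2^-1 * c i j k)%:MP + (2^-1 * c i j k)%:MP : {mpoly C[n]})
  by rewrite -mpolyCD -half.
rewrite (mderiv_comm k j b) (mderiv_comm k i a) linA (Hanti j i k).
rewrite !mulrN !mpolyCN; ring.
Qed.

Lemma mpolyC_sum2 (F : 'I_n -> 'I_n -> C) :
  (\sum_i \sum_j F i j)%:MP = \sum_i \sum_j (F i j)%:MP :> {mpoly C[n]}.
Proof. rewrite raddf_sum; apply: eq_bigr => i _; by rewrite raddf_sum. Qed.

Lemma nab_lin_dd v w :
  nab (lin v) (dd (lin w)) = dd (lin (fun k => 2^-1 * lie c v w k)).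
Proof.
apply/ffunP => k; rewrite !ffunE !mderiv_lin /= /lie.
have -> : 2^-1 * (\sum_i \sum_j v i * w j * c i j k) =
   \sum_i \sum_j 2^-1 * (v i * w j * c i j k).
  rewrite mulr_sumr; apply: eq_bigr => i _; by rewrite mulr_sumr.
rewrite mpolyC_sum2; apply: eq_big2 => i j.
rewrite !ffunE !mderiv_lin mderivC !mpolyCM; ring.
Qed.

Lemma rot3 (F : 'I_n -> 'I_n -> 'I_n -> C) :
  \sum_a \sum_b \sum_d F a b d = \sum_b \sum_d \sum_a F a b d.
Proof. rewrite exchange_big; apply: eq_bigr => b _; exact: exchange_big. Qed.

Lemma swap22 (F : 'I_n -> 'I_n -> 'I_n -> 'I_n -> C) :
  \sum_a \sum_b \sum_d \sum_e F a b d e = \sum_d \sum_e \sum_a \sum_b F a b d e.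
Proof.
under eq_bigr => a _ do rewrite rot3.
exact: (rot3 (fun a d e => \sum_b F a b d e)).
Qed.

Lemma lie_ext v v' u u' k : v =1 v' -> u =1 u' -> lie c v u k = lie c v' u' k.
Proof. by move=> h1 h2; apply: eq_bigr => i _; apply: eq_bigr => j _; rewrite h1 h2. Qed.

Lemma lieZr a v u k : lie c v (fun q => a * u q) k = a * lie c v u k.
Proof.
rewrite /lie mulr_sumr; apply: eq_bigr => i _; rewrite mulr_sumr.
by apply: eq_bigr => j _; ring.
Qed.

Lemma lie_combr (U : 'I_n -> 'I_n -> C) z v k :
  \sum_i lie c v (U i) k * z i = lie c v (fun q => \sum_i U i q * z i) k.
Proof.
rewrite /lie.
under eq_bigr => i _ do rewrite mulr_suml.
rewrite exchange_big /=; apply: eq_bigr => p _.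
under eq_bigr => i _ do rewrite mulr_suml.
rewrite exchange_big /=; apply: eq_bigr => q _.
rewrite mulr_sumr mulr_suml; apply: eq_bigr => i _; ring.
Qed.

Lemma lie_delta_comb u z k :
  \sum_i lie c u (fun q => (i == q)%:R) k * z i = lie c u z k.
Proof.
rewrite lie_combr; apply: lie_ext => // q.
rewrite (bigD1 q) //= big1 ?eqxx ?mul1r ?addr0 //.
by move=> i /negbTE ->; rewrite mul0r.
Qed.

Lemma E1 a b d k : lie c a (lie c b d) k =
  \sum_i \sum_j \sum_l \sum_m a i * b j * d l * (c j l m * c i m k).
Proof.
rewrite /lie; apply: eq_bigr => i _.
transitivity (\sum_m \sum_j \sum_l a i * b j * d l * (c j l m * c i m k)).
  apply: eq_bigr => m _; rewrite mulr_sumr mulr_suml; apply: eq_bigr => j _.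
  rewrite mulr_sumr mulr_suml; apply: eq_bigr => l _; ring.
exact: (rot3 (fun m j l => a i * b j * d l * (c j l m * c i m k))).
Qed.

Lemma E3 a b d k : lie c (lie c a b) d k =
  \sum_i \sum_j \sum_l \sum_m a i * b j * d l * (c i j m * c m l k).
Proof.
rewrite /lie.
transitivity (\sum_m \sum_l \sum_i \sum_j a i * b j * d l * (c i j m * c m l k)).
  apply: eq_bigr => m _; apply: eq_bigr => l _; rewrite !mulr_suml.
  apply: eq_bigr => i _; rewrite !mulr_suml; apply: eq_bigr => j _; ring.
rewrite swap22; apply: eq_bigr => i _; apply: eq_bigr => j _; exact: exchange_big.
Qed.

Lemma jacobi (Hanti : forall i j k, c i j k = - c j i k)
  (HJ : forall i j k l, \sum_(m < n) (c i j m * c m k l + c j k m * c m i l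
                                    + c k i m * c m j l) = 0) v w z k :
  lie c v (lie c w z) k - lie c w (lie c v z) k = lie c (lie c v w) z k.
Proof.
apply/eqP; rewrite -subr_eq0; apply/eqP.
rewrite E1 E1 E3 [X in _ - X - _]exchange_big /= -!sumrB.
apply: big1 => i _; rewrite -!sumrB; apply: big1 => j _; rewrite -!sumrB.
apply: big1 => l _; rewrite -!sumrB.
have -> : \sum_m (v i * w j * z l * (c j l m * c i m k) -
                  w j * v i * z l * (c i l m * c j m k) -
                  v i * w j * z l * (c i j m * c m l k))
   = - (v i * w j * z l) * \sum_(m < n) (c i j m * c m l k + c j l m * c m i k
                                    + c l i m * c m j k).
  rewrite mulr_sumr; apply: eq_bigr => m _.
  rewrite (Hanti m i k) (Hanti l i m) (Hanti m j k); ring.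
by rewrite HJ mulr0.
Qed.

Lemma curv_lin (Hanti : forall i j k, c i j k = - c j i k)
  (HJ : forall i j k l, \sum_(m < n) (c i j m * c m k l + c j k m * c m i l
                                    + c k i m * c m j l) = 0) v w z :
  curvature c nab (lin v) (lin w) (dd (lin z))
  = fscaleC (- 4^-1) (dd (lin (lie c (lie c v w) z))).
Proof.
rewrite /curvature !nab_lin_dd pbr_lin_lin !nab_lin_dd !dd_lin.
apply/ffunP => k; rewrite !ffunE -!mpolyCB -mul_mpolyC -mpolyCM; congr (_%:MP).
rewrite !lieZr -(jacobi Hanti HJ); by field.
Qed.

Lemma delta_lin i : ('X_i : {mpoly C[n]}) = lin (fun q : 'I_n => (i == q)%:R).
Proof.
rewrite /lin (bigD1 i) //= big1 ?eqxx ?scale1r ?addr0 //.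
by move=> q /negbTE; rewrite eq_sym => ->; rewrite scale0r.
Qed.

Lemma ham_lin w i : ham c (lin w) i = lin (lie c w (fun q => (i == q)%:R)).
Proof. by rewrite ffunE delta_lin pbr_lin_lin. Qed.

Lemma ham_comb w z : \sum_i ham c (lin w) i * (z i)%:MP = lin (lie c w z).
Proof.
under eq_bigr => i _ do rewrite ham_lin.
rewrite lin_comb; apply: lin_ext => k; exact: lie_delta_comb.
Qed.

Lemma vapp_lin X u : vapp X (lin u) = \sum_i X i * (u i)%:MP.
Proof. by apply: eq_bigr => i _; rewrite mderiv_lin. Qed.

Lemma pair_dd X z : pair X (dd (lin z)) = \sum_i X i * (z i)%:MP.
Proof. by apply: eq_bigr => i _; rewrite ffunE mderiv_lin. Qed.

Lemma cov_lin v w z :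
  cov_pair c nab (lin v) (ham c (lin w)) (dd (lin z))
  = lin (lie c v (lie c w z)) - lin (lie c w (fun k => 2^-1 * lie c v z k)).
Proof.
by rewrite /cov_pair pair_dd ham_comb vapp_lin ham_comb nab_lin_dd pair_dd ham_comb.
Qed.

Lemma vbr_lin (Hanti : forall i j k, c i j k = - c j i k)
  (HJ : forall i j k l, \sum_(m < n) (c i j m * c m k l + c j k m * c m i l
                                    + c k i m * c m j l) = 0) v w z :
  pair (vbr (ham c (lin v)) (ham c (lin w))) (dd (lin z)) = lin (lie c (lie c v w) z).
Proof.
rewrite pair_dd.
under eq_bigr => i _ do rewrite ffunE !ham_lin !vapp_lin ham_comb ham_comb linB.
rewrite lin_comb; apply: lin_ext => k /=.
under eq_bigr => i _ do rewrite (jacobi Hanti HJ).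
exact: lie_delta_comb.
Qed.

Lemma tors_lin (Hanti : forall i j k, c i j k = - c j i k)
  (HJ : forall i j k l, \sum_(m < n) (c i j m * c m k l + c j k m * c m i l
                                    + c k i m * c m j l) = 0) v w z :
  torsion_pair c nab (lin v) (lin w) (dd (lin z))
  = 2^-1 *: lin (lie c (lie c v w) z).
Proof.
rewrite /torsion_pair !cov_lin (vbr_lin Hanti HJ) !linB linZ.
apply: lin_ext => k /=; rewrite !lieZr -(jacobi Hanti HJ); by field.
Qed.

End Aux.

Theorem proposition5p1p1 (C : numClosedFieldType) (n : nat)
  (c : 'I_n -> 'I_n -> 'I_n -> C) (Hlie : is_lie_sc c) :
  exists nabla : SPoly C n -> oneform C n -> oneform C n,
    [/\ preconnection c nabla,
        poisson_compatible c nabla,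
        (forall v w : 'I_n -> C,
            nabla (lin v) (dd (lin w)) = fscaleC (2^-1) (dd (lin (lie c v w)))),
        (forall v w z : 'I_n -> C,
            curvature c nabla (lin v) (lin w) (dd (lin z))
            = fscaleC (- 4^-1) (dd (lin (lie c (lie c v w) z)))) &
        (forall v w z : 'I_n -> C,
            torsion_pair c nabla (lin v) (lin w) (dd (lin z))
            = 2^-1 *: lin (lie c (lie c v w) z))].
Proof.
case: Hlie => _ Hanti HJ.
exists (nab c); split.
- exact: nab_pre.
- exact: nab_pc.
- move=> v w; rewrite nab_lin_dd !dd_lin; apply/ffunP => k.
  by rewrite !ffunE -mul_mpolyC -mpolyCM.
- exact: curv_lin.
- exact: tors_lin.
Qed.
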